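(* Let $\alpha^s=\alpha^s(t,x)$ and $\beta^s=\beta^s(t,x)$, $s=1,\dots,p$, be smooth solutions of the backward heat equation ($\alpha^s_t+\alpha^s_{xx}=0$, $\beta^s_t+\beta^s_{xx}=0$) satisfying $\sum_{s=1}^p(\alpha^s_x\beta^s-\alpha^s\beta^s_x)=0$. Then for all integers $i,j\ge0$, $$\sum_{s=1}^p\bigl(\alpha^s_i\beta^s_j-\alpha^s_j\beta^s_i\bigr)=0,$$ where the subscripts $i,j$ denote the $i$-th and $j$-th order derivatives with respect to $x$. *)

(* Defs.v *)
From Stdlib Require Import Reals.
From Coquelicot Require Import Coquelicot.
Open Scope R_scope.

(* Iterated partial derivatives of f : R -> R -> R (first argument t, second x).
   A list of directions: true = d/dt, false = d/dx; the head is applied last. *)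
Fixpoint pd (l : list bool) (f : R -> R -> R) : R -> R -> R :=
  match l with
  | nil => f
  | cons b l' =>
      let g := pd l' f in
      if b then (fun t x => Derive (fun t' => g t' x) t)
      else (fun t x => Derive (fun x' => g t x') x)
  end.

Definition smooth2 (f : R -> R -> R) : Prop :=
  forall l : list bool,
    (forall t x, ex_derive (fun t' => pd l f t' x) t /\
                 ex_derive (fun x' => pd l f t x') x) /\
    (forall t x, continuous (fun q : R * R => pd l f (fst q) (snd q)) (t, x)).

Definition dx (i : nat) (f : R -> R -> R) (t x : R) : R :=
  Derive_n (fun x' => f t x') i x.

Definition dt (f : R -> R -> R) (t x : R) : R :=
  Derive (fun t' => f t' x) t.

Definition backward_heat (f : R -> R -> R) : Prop :=
  forall t x, dt f t x + dx 2 f t x = 0.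

(* finite sum over s = 0, ..., p-1 (the paper's s = 1..p) *)
Fixpoint sumR (p : nat) (g : nat -> R) : R :=
  match p with
  | O => 0
  | S n => sumR n g + g n
  end.

(* Main.v *)
Require Import Defs.
From Stdlib Require Import Reals Lra Lia List.
From Coquelicot Require Import Coquelicot.
Open Scope R_scope.

Lemma pd_dx f i t x : pd (repeat false i) f t x = dx i f t x.
Proof.
  revert t x; induction i as [|i IH]; intros t x; [reflexivity|].
  change (Derive (fun x' => pd (repeat false i) f t x') x = Derive (fun y => dx i f t y) x).
  apply Derive_ext. intro y. apply IH.
Qed.

Lemma dx_ex_x f i t x : smooth2 f -> ex_derive (fun x' => dx i f t x') x.
Proof.
  intros Hs. destruct (Hs (repeat false i)) as [H _].
  apply (ex_derive_ext (fun x' => pd (repeat false i) f t x')).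
  - intro; apply pd_dx.
  - apply H.
Qed.

Lemma dx_is_x f i t x : smooth2 f -> is_derive (fun x' => dx i f t x') x (dx (S i) f t x).
Proof.
  intros Hs. apply Derive_correct. apply dx_ex_x; auto.
Qed.

Lemma dx_ex_t f i t x : smooth2 f -> ex_derive (fun t' => dx i f t' x) t.
Proof.
  intros Hs. destruct (Hs (repeat false i)) as [H _].
  apply (ex_derive_ext (fun t' => pd (repeat false i) f t' x)).
  - intro; apply pd_dx.
  - exact (proj1 (H t x)).
Qed.

Lemma dx_t f : smooth2 f -> backward_heat f ->
  forall i t x, Derive (fun t' => dx i f t' x) t = - dx (S (S i)) f t x.
Proof.
  intros Hs Hh i; induction i as [|i IH]; intros t x.
  - specialize (Hh t x). unfold dt in Hh.
    change (Derive (fun t' => f t' x) t = - dx 2 f t x). lra.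
  - set (g := pd (repeat false i) f).
    transitivity (Derive (fun t' => Derive (fun x' => g t' x') x) t).
    { apply Derive_ext. intro t'.
      change (Derive (fun y => dx i f t' y) x = Derive (fun x' => g t' x') x).
      apply Derive_ext. intro y. unfold g. rewrite pd_dx. reflexivity. }
    rewrite (Schwarz g t x).
    + transitivity (Derive (fun x' => - dx (S (S i)) f t x') x).
      { apply Derive_ext. intro y. rewrite <- IH. apply Derive_ext.
        intro; unfold g; apply pd_dx. }
      rewrite Derive_opp. reflexivity.
    + exists (mkposreal 1 Rlt_0_1). intros u v _ _.
      destruct (Hs (repeat false i)) as [H1 _].
      destruct (Hs (false :: repeat false i)) as [H2 _].
      destruct (Hs (true :: repeat false i)) as [H3 _].
      split; [exact (proj1 (H1 u v))|]. split; [exact (proj2 (H1 u v))|]. split; [exact (proj1 (H2 u v)) | exact (proj2 (H3 u v))].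
    + apply continuity_2d_pt_filterlim.
      destruct (Hs (true :: false :: repeat false i)) as [_ H]. exact (H t x).
    + apply continuity_2d_pt_filterlim.
      destruct (Hs (false :: true :: repeat false i)) as [_ H]. exact (H t x).
Qed.

Lemma dx_is_t f i t x : smooth2 f -> backward_heat f ->
  is_derive (fun t' => dx i f t' x) t (- dx (S (S i)) f t x).
Proof.
  intros Hs Hh. rewrite <- dx_t by auto. apply Derive_correct. apply dx_ex_t; auto.
Qed.

Lemma sumR_ext n g h : (forall s, (s < n)%nat -> g s = h s) -> sumR n g = sumR n h.
Proof.
  induction n; intros H; simpl; auto.
  rewrite IHn by (intros; apply H; lia). rewrite H by lia. reflexivity.
Qed.

Lemma sumR_plus n g h : sumR n (fun s => g s + h s) = sumR n g + sumR n h.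
Proof. induction n; simpl; [lra|]. rewrite IHn. lra. Qed.

Lemma sumR_opp n g : sumR n (fun s => - g s) = - sumR n g.
Proof. induction n; simpl; [lra|]. rewrite IHn. lra. Qed.

Lemma sumR_zero n : sumR n (fun _ => 0) = 0.
Proof. induction n; simpl; [lra|]. rewrite IHn. lra. Qed.

Lemma sumR_derive n (g : nat -> R -> R) g' y :
  (forall s, (s < n)%nat -> is_derive (g s) y (g' s)) ->
  is_derive (fun z => sumR n (fun s => g s z)) y (sumR n g').
Proof.
  induction n; intros H; simpl.
  - exact (is_derive_const (K:=R_AbsRing) (V:=R_NormedModule) 0 y).
  - apply (is_derive_plus (fun z => sumR n (fun s => g s z)) (g n)).
    + apply IHn. intros; apply H; lia.
    + apply H; lia.
Qed.

Lemma is_derive_val (f : R -> R) y l l' : is_derive f y l -> l = l' -> is_derive f y l'.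
Proof. intros H ->; exact H. Qed.

Lemma is_derive_term (f1 f2 f3 f4 : R -> R) (d1 d2 d3 d4 y : R) :
  is_derive f1 y d1 -> is_derive f2 y d2 -> is_derive f3 y d3 -> is_derive f4 y d4 ->
  is_derive (fun z => f1 z * f2 z - f3 z * f4 z) y
    (d1 * f2 y + f1 y * d2 - (d3 * f4 y + f3 y * d4)).
Proof.
  intros H1 H2 H3 H4.
  apply (is_derive_minus (fun z => f1 z * f2 z) (fun z => f3 z * f4 z)).
  - eapply is_derive_val. apply (is_derive_mult f1 f2); [exact H1|exact H2|intros; apply Rmult_comm]. unfold plus, mult; simpl. reflexivity.
  - eapply is_derive_val. apply (is_derive_mult f3 f4); [exact H3|exact H4|intros; apply Rmult_comm]. unfold plus, mult; simpl. reflexivity.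
Qed.

Lemma deriv_zero (h : R -> R) y l : (forall z, h z = 0) -> is_derive h y l -> l = 0.
Proof.
  intros Hz Hd. apply is_derive_unique in Hd. rewrite <- Hd.
  rewrite (Derive_ext h (fun _ => 0)) by auto. apply Derive_const.
Qed.

Definition Wt (a b : nat -> R -> R -> R) (i j : nat) (t x : R) (s : nat) : R :=
  dx i (a s) t x * dx j (b s) t x - dx j (a s) t x * dx i (b s) t x.
Definition W p a b i j t x := sumR p (Wt a b i j t x).

Lemma W_anti p a b i j t x : W p a b j i t x = - W p a b i j t x.
Proof.
  unfold W. rewrite <- sumR_opp. apply sumR_ext. intros; unfold Wt; ring.
Qed.

Lemma W_diag p a b i t x : W p a b i i t x = 0.
Proof.
  unfold W. rewrite <- (sumR_zero p). apply sumR_ext. intros; unfold Wt; ring.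
Qed.

Lemma W_dx p a b i j t x :
  (forall s, (s < p)%nat -> smooth2 (a s)) ->
  (forall s, (s < p)%nat -> smooth2 (b s)) ->
  is_derive (fun x' => W p a b i j t x') x (W p a b (S i) j t x + W p a b i (S j) t x).
Proof.
  intros Ha Hb. unfold W.
  eapply is_derive_val.
  - apply (sumR_derive p (fun s x' => Wt a b i j t x' s)). intros s Hs.
    apply is_derive_term; apply dx_is_x; auto.
  - rewrite <- sumR_plus. apply sumR_ext. intros. unfold Wt. ring.
Qed.

Lemma W_dt p a b i j t x :
  (forall s, (s < p)%nat -> smooth2 (a s)) ->
  (forall s, (s < p)%nat -> smooth2 (b s)) ->
  (forall s, (s < p)%nat -> backward_heat (a s)) ->
  (forall s, (s < p)%nat -> backward_heat (b s)) ->
  is_derive (fun t' => W p a b i j t' x) t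
    (- (W p a b (S (S i)) j t x + W p a b i (S (S j)) t x)).
Proof.
  intros Ha Hb Hha Hhb. unfold W.
  eapply is_derive_val.
  - apply (sumR_derive p (fun s t' => Wt a b i j t' x s)). intros s Hs.
    apply is_derive_term; apply dx_is_t; auto.
  - rewrite <- sumR_plus, <- sumR_opp. apply sumR_ext. intros. unfold Wt. ring.
Qed.

Theorem lemma5 (p : nat) (alpha beta : nat -> R -> R -> R)
  (Hsa : forall s, (s < p)%nat -> smooth2 (alpha s))
  (Hsb : forall s, (s < p)%nat -> smooth2 (beta s))
  (Hha : forall s, (s < p)%nat -> backward_heat (alpha s))
  (Hhb : forall s, (s < p)%nat -> backward_heat (beta s))
  (H0 : forall t x,
      sumR p (fun s => dx 1 (alpha s) t x * beta s t x
                       - alpha s t x * dx 1 (beta s) t x) = 0) :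
  forall (i j : nat) (t x : R),
    sumR p (fun s => dx i (alpha s) t x * dx j (beta s) t x
                     - dx j (alpha s) t x * dx i (beta s) t x) = 0.
Proof.
  set (P := fun n => forall i j t x, (i + j = n)%nat -> W p alpha beta i j t x = 0).
  assert (Hx : forall n, P (S n) -> forall i j t x, (i + j = S n)%nat ->
            W p alpha beta (S i) j t x + W p alpha beta i (S j) t x = 0).
  { intros n Hn i j t x Hij.
    eapply (deriv_zero (fun x' => W p alpha beta i j t x') x).
    - intro z. apply Hn. exact Hij.
    - apply W_dx; auto. }
  assert (Ht : forall n, P n -> forall i j t x, (i + j = n)%nat ->
            W p alpha beta (S (S i)) j t x + W p alpha beta i (S (S j)) t x = 0).
  { intros n Hn i j t x Hij.
    assert (E := deriv_zero (fun t' => W p alpha beta i j t' x) t _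
                  (fun z => Hn i j z x Hij) (W_dt p alpha beta i j t x Hsa Hsb Hha Hhb)).
    lra. }
  assert (Hall : forall n, P n /\ P (S n)).
  { induction n as [|n [IH1 IH2]].
    - split.
      + intros i j t x Hij. assert (i = 0%nat) by lia. assert (j = 0%nat) by lia. subst.
        apply W_diag.
      + intros i j t x Hij.
        assert (E : W p alpha beta 1 0 t x = 0) by exact (H0 t x).
        destruct i as [|[|i]].
        * simpl in Hij. subst j. rewrite W_anti. lra.
        * assert (j = 0%nat) by lia. subst j. exact E.
        * lia.
    - split; [exact IH2|].
      intros i j t x Hij.
      assert (E0 : W p alpha beta (S (S n)) 0%nat t x = 0).
      { pose proof (Hx n IH2 (S n) 0%nat t x ltac:(lia)) as A1.
        pose proof (Ht n IH1 n 0%nat t x ltac:(lia)) as A2.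
        pose proof (Hx n IH2 n 1%nat t x ltac:(lia)) as A3.
        simpl in A1, A2, A3. lra. }
      assert (Hk : forall k, (k <= S (S n))%nat -> W p alpha beta (S (S n) - k) k t x = 0).
      { induction k as [|k IHk]; intros Hk.
        - rewrite Nat.sub_0_r. exact E0.
        - pose proof (Hx n IH2 (S (S n) - S k)%nat k t x ltac:(lia)) as A.
          replace (S (S (S n) - S k)%nat) with (S (S n) - k)%nat in A by lia.
          rewrite IHk in A by lia. lra. }
      replace i with (S (S n) - j)%nat by lia. apply Hk. lia. }
  intros i j t x. exact (proj1 (Hall (i + j)%nat) i j t x eq_refl).
Qed.
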